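(* Let $P$ be a finite type $\mathbb{N}$-graded upho poset with minimum element $\hat 0$ and rank function $\rho$, and suppose $P$ is a meet semilattice. Then for every integer $m\ge 1$, \[ \sum_{\substack{(p_1,\ldots,p_m)\in P^m,\\ p_1\wedge\cdots\wedge p_m=\hat 0}} x^{\rho(p_1)+\cdots+\rho(p_m)} = F_P(x)^m\cdot F_P(x^m)^{-1} \] as formal power series.
   Context: A poset $P$ is $\mathbb{N}$-graded if $P = P_0\sqcup P_1\sqcup P_2\sqcup\cdots$ (disjoint union) such that every maximal chain has the form $p_0\lessdot p_1\lessdot p_2\lessdot\cdots$ with $p_i\in P_i$ for all $i$. Its rank function $\rho\colon P\to\mathbb{N}$ is $\rho(p)=i$ for $p\in P_i$. $P$ has finite type if $\#P_i<\infty$ for all $i$. The rank generating function is $F_P(x)=\sum_{p\in P}x^{\rho(p)}$. $P$ is upper homogeneous (upho) if for every $p\in P$ the principal order filter $V_p=\{q\in P: q\ge p\}$ is isomorphic as a poset to $P$. A meet semilattice is a poset in which every pair of elements has a greatest lower bound $\wedge$. *)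

(* Defs.v *)
From HB Require Import structures.
From mathcomp Require Import all_boot all_order all_algebra finmap.
From mathcomp Require Import boolp classical_sets cardinality.
Set Implicit Arguments. Unset Strict Implicit. Unset Printing Implicit Defensive.
Import Order.TTheory GRing.Theory Num.Theory.
Local Open Scope order_scope.

Section PosetDefs.
Context {d : Order.disp_t} {T : porderType d}.

Definition covers (a b : T) : Prop :=
  a < b /\ ~ (exists c, a < c /\ c < b).

Definition is_chain (C : set T) : Prop :=
  forall x y, C x -> C y -> x <= y \/ y <= x.

Definition maximal_chain (C : set T) : Prop :=
  is_chain C /\ forall D : set T, is_chain D -> (C `<=` D)%classic -> D = C.

Definition N_graded (rho : T -> nat) : Prop :=
  forall C : set T, maximal_chain C ->
    exists c : nat -> T,
      (forall x, C x <-> exists i, c i = x) /\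
      (forall i, covers (c i) (c i.+1) /\ rho (c i) = i).

Definition finite_type (rho : T -> nat) : Prop :=
  forall i, finite_set [set p : T | rho p = i].

Definition filter_of (p : T) : set T := [set q : T | p <= q].

Definition iso_to_filter (p : T) : Prop :=
  exists f : T -> T,
    (forall x, filter_of p (f x)) /\
    (forall q, filter_of p q -> exists x, f x = q) /\
    (forall x y, (x <= y) <-> (f x <= f y)).

Definition upho : Prop := forall p : T, iso_to_filter p.

End PosetDefs.

Definition card_set {U : choiceType} (A : set U) : nat := #|` fset_set A|%fset.

Definition series := nat -> rat.

Local Open Scope ring_scope.

Definition smul (a b : series) : series :=
  fun n => \sum_(i < n.+1) a i * b (n - i)%N.

Definition sone : series := fun n => if n == 0%N then 1 else 0.

Definition spow (a : series) (m : nat) : series := iter m (smul a) sone.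

(* substitution x |-> x^m *)
Definition ssubst_pow (a : series) (m : nat) : series :=
  fun n => if (m %| n)%N then a (n %/ m)%N else 0.

(* multiplicative inverse of a power series with invertible constant term:
   b_0 = a_0^-1, b_n = - a_0^-1 * sum_{k=1}^{n} a_k b_{n-k}.
   inv_list a n = [:: b_n; b_{n-1}; ...; b_0]. *)
Fixpoint inv_list (a : series) (n : nat) : seq rat :=
  match n with
  | 0%N => [:: (a 0%N)^-1]
  | n'.+1 =>
      let l := inv_list a n' in
      (- (a 0%N)^-1 * \sum_(k < n'.+1) a k.+1 * nth 0 l k) :: l
  end.

Definition sinv (a : series) : series := fun n => head 0 (inv_list a n).

Definition rank_gf {d} {T : porderType d} (rho : T -> nat) : series :=
  fun n => (card_set [set p : T | rho p = n])%:R.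

Definition meet_seq {d} {T : meetSemilatticeType d} (s : seq T) (dflt : T) : T :=
  match s with
  | [::] => dflt
  | x :: s' => foldl Order.meet x s'
  end.

Definition meet_zero_gf {d} {T : meetSemilatticeType d} (rho : T -> nat)
    (z : T) (m : nat) : series :=
  fun n => (card_set [set t : m.-tuple T |
              meet_seq t z = z /\ (\sum_(p <- t) rho p)%N = n])%:R.

(* Main.v *)
Require Import Defs.
From mathcomp Require Import all_boot all_order all_algebra finmap.
From mathcomp Require Import boolp classical_sets cardinality.
Set Implicit Arguments. Unset Strict Implicit. Unset Printing Implicit Defensive.
Import Order.TTheory GRing.Theory Num.Theory.

Section SeriesAlg.
Local Open Scope ring_scope.

Lemma smul_coef (a b : series) (p q : {poly rat}) n :
  (forall i, (i <= n)%N -> p`_i = a i) -> (forall i, (i <= n)%N -> q`_i = b i) ->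
  smul a b n = (p * q)`_n.
Proof.
move=> hp hq; rewrite coefM /smul; apply: eq_bigr => [[i /= hi]] _.
by rewrite hp // hq // leq_subr.
Qed.

Definition polyof (a : series) n : {poly rat} := \poly_(i < n.+1) a i.

Lemma polyofE a n i : (i <= n)%N -> (polyof a n)`_i = a i.
Proof. by move=> hi; rewrite coef_poly ltnS hi. Qed.

Lemma smulC a b : smul a b = smul b a.
Proof.
apply: funext => n.
rewrite (smul_coef (p := polyof a n) (q := polyof b n)); try exact: polyofE.
by rewrite mulrC -(smul_coef (a := b) (b := a)) //; exact: polyofE.
Qed.

Lemma smulA a b c : smul (smul a b) c = smul a (smul b c).
Proof.
apply: funext => n.
rewrite (smul_coef (p := polyof a n * polyof b n) (q := polyof c n)); last first.
- exact: polyofE.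
- move=> i hi; rewrite (smul_coef (p := polyof a n) (q := polyof b n)) // => j hj;
  apply: polyofE; exact: leq_trans hj hi.
rewrite -mulrA (smul_coef (p := polyof a n) (q := polyof b n * polyof c n)) //.
- exact: polyofE.
- move=> i hi; rewrite (smul_coef (p := polyof b n) (q := polyof c n)) // => j hj;
  apply: polyofE; exact: leq_trans hj hi.
Qed.

Lemma smul1 a : smul a sone = a.
Proof.
apply: funext => n.
rewrite (smul_coef (p := polyof a n) (q := 1)); first by rewrite mulr1 polyofE.
- exact: polyofE.
- by move=> i _; rewrite coef1 /sone; case: (i == 0%N).
Qed.

Lemma inv_list_nth a n k : (k <= n)%N -> nth 0 (inv_list a n) k = sinv a (n - k)%N.
Proof.
elim: n k => [|n IH] [|k] //=.
by rewrite ltnS subSS => /IH.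
Qed.

Lemma smul_sinv a : a 0%N != 0 -> smul a (sinv a) = sone.
Proof.
move=> a0; apply: funext => n; rewrite /smul /sone.
case: n => [|n].
  by rewrite big_ord1 /sinv /= mulfV.
rewrite big_ord_recl /= subn0.
have -> : sinv a n.+1 = - (a 0%N)^-1 * \sum_(k < n.+1) a k.+1 * sinv a (n - k)%N.
  rewrite {1}/sinv /=; congr (_ * _); apply: eq_bigr => [[k hk]] _ /=.
  by rewrite inv_list_nth.
rewrite mulrA mulrN mulfV // mulN1r.
have -> : \sum_(i < n.+1) a (bump 0 i) * sinv a (n.+1 - bump 0 i)%N =
          \sum_(k < n.+1) a k.+1 * sinv a (n - k)%N.
  by apply: eq_bigr => i _; rewrite /bump /= add1n subSS.
by rewrite addNr.
Qed.

End SeriesAlg.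

Section PosetFacts.
Variables (d : Order.disp_t) (T : meetSemilatticeType d) (rho : T -> nat) (z : T).
Hypothesis hmin : forall p : T, (z <= p)%O.
Hypothesis hgr : N_graded rho.
Hypothesis hup : @upho d T.
Local Open Scope order_scope.
Local Open Scope classical_set_scope.

Lemma exists_maxchain (C : set T) : is_chain C ->
  exists D, maximal_chain D /\ C `<=` D.
Proof.
move=> hC.
have [|A [PA Amax]] := @Zorn_bigcup T [set D | is_chain (C `|` D)].
  move=> F FP Ftot x y [Cx|[X FX Xx]] [Cy|[Y FY Yy]].
  - exact: hC.
  - by apply: (FP Y FY); [left|right].
  - by apply: (FP X FX); [right|left].
  - case: (Ftot X Y FX FY) => [XY|YX].
    + by apply: (FP Y FY); right => //; apply: XY.
    + by apply: (FP X FX); right => //; apply: YX.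
exists (C `|` A); split; last by move=> x Cx; left.
split => // E hE CAE.
have PE : is_chain (C `|` E).
  by move=> x y [Cx|Ex] [Cy|Ey]; apply: hE => //; apply: CAE; left.
have AE : A `<=` E by move=> x Ax; apply: CAE; right.
have EA : E `<=` A.
  apply: contrapT => nEA; exact: (Amax E (conj AE nEA) PE).
apply/seteqP; split => // x Ex; right; exact: EA.
Qed.

Local Close Scope classical_set_scope.
Local Open Scope order_scope.

Lemma chain_lt (c : nat -> T) : (forall i, covers (c i) (c i.+1)) ->
  forall i j, (i < j)%N -> c i < c j.
Proof.
move=> hc i; elim=> // j IH; rewrite ltnS leq_eqVlt => /orP[/eqP ->|/IH h].
  by case: (hc j).
by apply: lt_trans h _; case: (hc j).
Qed.

Lemma chain_le (c : nat -> T) : (forall i, covers (c i) (c i.+1)) ->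
  forall i j, (i <= j)%N -> c i <= c j.
Proof.
move=> hc i j; rewrite leq_eqVlt => /orP[/eqP ->//|/(chain_lt hc)]; exact: ltW.
Qed.

Lemma chain_through (a b : T) : a <= b ->
  exists c : nat -> T, (forall i, covers (c i) (c i.+1) /\ rho (c i) = i) /\
    c 0%N = z /\ c (rho a) = a /\ c (rho b) = b.
Proof.
move=> ab.
have hC : is_chain [set x | x = z \/ x = a \/ x = b].
  move=> x y [->|[->|->]] [->|[->|->]]; rewrite ?hmin ?lexx ?ab; auto.
have [D [hD CD]] := exists_maxchain hC.
have [c [hcD hc]] := hgr hD.
have hcov i : covers (c i) (c i.+1) by case: (hc i).
have inD x : D x -> c (rho x) = x.
  by move=> /hcD [i <-]; case: (hc i) => _ ->.
exists c; split => //; split; last split.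
- have [k hk] := (hcD z).1 (CD z (or_introl erefl)).
  apply/le_anti; rewrite hmin andbT -hk; apply: chain_le => //.
- by apply: inD; apply: CD; right; left.
- by apply: inD; apply: CD; right; right.
Qed.

Lemma rho_z : rho z = 0%N.
Proof.
have [c [hc [c0 [hz _]]]] := chain_through (lexx z).
by have := (hc 0%N).2; rewrite c0.
Qed.

Lemma rho0 p : rho p = 0%N -> p = z.
Proof.
move=> hp; have [c [hc [c0 [_ hpp]]]] := chain_through (hmin p).
by rewrite -hpp hp c0.
Qed.

Lemma covers_rho a b : covers a b -> rho b = (rho a).+1.
Proof.
move=> [ab nc]; have [c [hc [_ [ha hb]]]] := chain_through (ltW ab).
have hcov i : covers (c i) (c i.+1) by case: (hc i).
have hij : (rho a < rho b)%N.
  rewrite ltnNge; apply/negP => /(chain_le hcov); rewrite ha hb => ba.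
  by move: (lt_le_trans ab ba); rewrite ltxx.
apply/eqP; rewrite eqn_leq hij andbT leqNgt; apply/negP => hlt.
apply: nc; exists (c (rho a).+1); split.
- by rewrite -{1}ha; apply: chain_lt.
- by rewrite -hb; apply: chain_lt.
Qed.

Section Iso.
Variables (q : T) (f : T -> T).
Hypothesis fq : forall x, q <= f x.
Hypothesis fsurj : forall y, q <= y -> exists x, f x = y.
Hypothesis fle : forall x y, (x <= y) <-> (f x <= f y).

Lemma fleE x y : (f x <= f y) = (x <= y).
Proof. by case: (fle x y) => h1 h2; apply/idP/idP => [/h2|/h1]. Qed.

Lemma finj : injective f.
Proof. by move=> x y h; apply/le_anti; rewrite -fleE -[y <= x]fleE h lexx. Qed.

Lemma fltE x y : (f x < f y) = (x < y).
Proof. by rewrite !lt_neqAle fleE (inj_eq finj). Qed.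

Lemma fz : f z = q.
Proof.
have [x0 hx0] := fsurj (lexx q).
by apply/le_anti; rewrite fq -hx0 fleE hmin.
Qed.

Lemma fcovers a b : covers a b -> covers (f a) (f b).
Proof.
move=> [ab nc]; split; first by rewrite fltE.
move=> [y [h1 h2]]; have [x hx] := fsurj (le_trans (fq a) (ltW h1)).
by apply: nc; exists x; rewrite -(fltE a x) -(fltE x b) hx.
Qed.

Lemma rho_f x : rho (f x) = (rho q + rho x)%N.
Proof.
have [c [hc [c0 [_ hx]]]] := chain_through (hmin x).
suff H : forall i, rho (f (c i)) = (rho q + i)%N by rewrite -{1}hx H.
elim=> [|i IH]; first by rewrite c0 fz addn0.
rewrite (covers_rho (fcovers (hc i).1)) IH; by rewrite addnS.
Qed.

Lemma f_meet x y : f (x `&` y) = f x `&` f y.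
Proof.
have [w hw] : exists w, f w = f x `&` f y by apply: fsurj; rewrite lexI !fq.
rewrite -hw; apply/le_anti/andP; split.
- by rewrite hw lexI !fleE leIl leIr.
- by rewrite fleE lexI -[w <= x]fleE -[w <= y]fleE hw leIl leIr.
Qed.

Lemma f_foldl x s : f (foldl Order.meet x s) = foldl Order.meet (f x) (map f s).
Proof. by elim: s x => //= y s IH x; rewrite IH f_meet. Qed.

End Iso.

Lemma get_iso q : exists f : T -> T, [/\ forall x, q <= f x,
  forall y, q <= y -> exists x, f x = y & forall x y, (x <= y) <-> (f x <= f y)].
Proof.
have [f [h1 [h2 h3]]] := hup q; exists f; split => //.
Qed.

Lemma rho_mono p x : p <= x -> (rho p <= rho x)%N.
Proof.
move=> px; have [f [h1 h2 h3]] := get_iso p.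
have [y <-] := h2 x px; rewrite (rho_f h1 h2 h3); exact: leq_addr.
Qed.

Lemma foldl_meet_ge (w x : T) (s : seq T) :
  (w <= foldl Order.meet x s) = (w <= x) && all (fun y => w <= y) s.
Proof.
elim: s x => [|y s IH] x /=; first by rewrite andbT.
by rewrite IH lexI andbA.
Qed.

End PosetFacts.

Lemma count_sum (U : Type) (P : pred U) (s : seq U) :
  count P s = \sum_(x <- s) P x.
Proof. by elim: s => [|x s IH]; rewrite ?big_nil ?big_cons //= IH. Qed.

Lemma sum_delta N (k : nat) (F : nat -> nat) :
  \sum_(j < N) (j == k :> nat) * F j = (k < N) * F k.
Proof.
elim: N => [|N IH]; first by rewrite big_ord0.
rewrite big_ord_recr /= IH.
case: (ltngtP k N) => [h|h|->].
- by rewrite ltnS (ltnW h) mul0n addn0.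
- by rewrite ltnS leqNgt h.
- by rewrite ltnSn.
Qed.

Lemma card_set_count (U : choiceType) (A : set U) (s : seq U) :
  uniq s -> (forall x, A x -> x \in s) ->
  card_set A = count (fun x => `[< A x >]) s.
Proof.
move=> us As.
have fA : finite_set A.
  apply: (sub_finite_set (B := [set` s])); last exact: finite_seq.
  by move=> x /As.
rewrite /card_set -size_filter; apply: perm_size; apply: uniq_perm.
- exact: fset_uniq.
- exact: filter_uniq.
move=> x; rewrite in_fset_set // mem_filter.
rewrite (_ : (x \in A) = `[< A x >]); last by apply/idP/asboolP => [/set_mem|/mem_set].
by apply/idP/idP => [h|/andP[]//]; rewrite h As //; apply/asboolP.
Qed.

Fixpoint tups (U : Type) (L : seq U) (k : nat) : seq (seq U) :=
  if k is k'.+1 then [seq x :: s | x <- L, s <- tups L k'] else [:: [::]].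

Lemma mem_tups (U : eqType) (L : seq U) k s :
  (s \in tups L k) = (size s == k) && all (mem L) s.
Proof.
elim: k s => [|k IH] [|x s] //=.
- by apply/allpairsP => [[[y t] [_ _]]].
- apply/allpairsP/idP => [[[y t] /= [hy ht [-> ->]]]|/andP[hs /andP[hx hall]]].
    by rewrite eqSS hy /= -IH.
  by exists (x, s); split => //; rewrite IH -eqSS hs.
Qed.

Lemma uniq_tups (U : eqType) (L : seq U) k : uniq L -> uniq (tups L k).
Proof.
move=> uL; elim: k => [|k IH] //=.
apply: allpairs_uniq => // [[x s] [y t]] _ _ /= [-> ->] //.
Qed.

Lemma count_tups (U : Type) (L : seq U) k (P : pred (seq U)) :
  count P (tups L k.+1) = \sum_(x <- L) count (fun s => P (x :: s)) (tups L k).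
Proof.
rewrite /= count_flatten sumnE !big_map; apply: eq_bigr => x _.
by rewrite count_map.
Qed.

Lemma card_tuple_set (U : choiceType) (L : seq U) k (Q : seq U -> Prop)
   (P : pred (seq U)) : uniq L ->
  (forall s, size s = k -> (Q s <-> P s)) ->
  (forall s, size s = k -> P s -> all (mem L) s) ->
  card_set [set t : k.-tuple U | Q t] = count P (tups L k).
Proof.
move=> uL hQ hP.
rewrite (card_set_count (s := pmap insub (tups L k))).
- rewrite (eq_count (a2 := P \o val)); last first.
    move=> t /=; apply/asboolP/idP => h.
    + by apply/(hQ _ (size_tuple t)).
    + by apply/(hQ _ (size_tuple t)).
  rewrite -count_map (pmap_filter (insubK _)).
  suff -> : [seq x <- tups L k | insub x : option (k.-tuple U)] = tups L k by [].
  apply/all_filterP/allP => s; rewrite mem_tups => /andP[/eqP hs _].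
  by case: insubP => // /negP; rewrite /= hs eqxx.
- exact: pmap_sub_uniq (uniq_tups _ uL).
- move=> t ht; rewrite mem_pmap_sub mem_tups size_tuple eqxx /=.
  by apply: hP; [exact: size_tuple | apply/(hQ _ (size_tuple t))].
Qed.

Section Main.
Variables (d : Order.disp_t) (T : meetSemilatticeType d) (rho : T -> nat) (z : T).
Hypothesis hmin : forall p : T, (z <= p)%O.
Hypothesis hgr : N_graded rho.
Hypothesis hfin : finite_type rho.
Hypothesis hup : @upho d T.
Variable m : nat.
Hypothesis hm : (1 <= m)%N.

Definition tsum (s : seq T) : nat := \sum_(p <- s) rho p.

Lemma fin_le N : finite_set [set p : T | (rho p <= N)%N].
Proof.
elim: N => [|N IH].
  apply: (sub_finite_set (B := [set p : T | rho p = 0%N])); last exact: hfin.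
  by move=> p /=; rewrite leqn0 => /eqP.
apply: (sub_finite_set (B := [set p : T | (rho p <= N)%N] `|` [set p | rho p = N.+1])).
  by move=> p /=; rewrite leq_eqVlt ltnS => /orP[/eqP ->|h]; [right|left].
by rewrite finite_setU; split => //; exact: hfin.
Qed.

Lemma rho_le_tsum x s : x \in s -> (rho x <= tsum s)%N.
Proof.
elim: s => // y s IH; rewrite inE /tsum big_cons => /orP[/eqP ->|/IH h].
  exact: leq_addr.
exact: leq_trans h (leq_addl _ _).
Qed.

Lemma tsum_ge q s : all (fun y => (q <= y)%O) s -> (size s * rho q <= tsum s)%N.
Proof.
elim: s => [|y s IH] //= /andP[hy /IH h].
rewrite /tsum big_cons mulSn leq_add //; exact: rho_mono hy.
Qed.

Variable n : nat.

Let L : seq T := fset_set [set p : T | (rho p <= n)%N].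

Lemma Lmem p : (p \in L) = (rho p <= n)%N.
Proof.
rewrite /L in_fset_set; last exact: fin_le.
by apply/idP/idP => [/set_mem //|h]; apply/mem_set.
Qed.

Lemma uL : uniq L.
Proof. exact: fset_uniq. Qed.

Let an j := count (fun p => rho p == j) L.

Lemma rank_gfE j : (j <= n)%N -> rank_gf rho j = (an j)%:R%R.
Proof.
move=> hj; rewrite /rank_gf (card_set_count (s := L)).
- by congr (_%:R%R); apply: eq_count => x; apply/asboolP/eqP.
- exact: uL.
- by move=> x /= hx; rewrite Lmem hx.
Qed.

Lemma sum_rank (H : nat -> nat) :
  \sum_(q <- L) H (rho q) = \sum_(j < n.+1) an j * H j.
Proof.
rewrite (eq_big_seq (fun q => \sum_(j < n.+1) (j == rho q :> nat) * H j)); last first.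
  by move=> q hq; rewrite sum_delta ltnS -Lmem hq mul1n.
rewrite exchange_big; apply: eq_bigr => j _.
rewrite /an count_sum big_distrl; apply: eq_bigr => q _.
by rewrite /= eq_sym.
Qed.

Let cnt k n' := count (fun s => tsum s == n') (tups L k).

Lemma spowE k n' : (n' <= n)%N -> spow (rank_gf rho) k n' = (cnt k n')%:R%R.
Proof.
elim: k n' => [|k IH] n' hn'.
  rewrite /spow /= /sone /cnt /= /tsum big_nil.
  by case: n' hn'.
rewrite [spow _ _]/spow /= -/(spow (rank_gf rho) k) /smul.
rewrite (eq_bigr (fun i : 'I_n'.+1 => (an i * cnt k (n' - i))%N%:R%R)); last first.
  move=> [i hi] _ /=; rewrite ltnS in hi; rewrite rank_gfE; last exact: leq_trans hi hn'.
  rewrite IH ?natrM //; exact: leq_trans (leq_subr _ _) hn'.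
rewrite -natr_sum; congr (_%:R%R).
rewrite /cnt count_tups.
rewrite (eq_bigr (fun x => (fun j => (j <= n')%N * cnt k (n' - j)) (rho x))); last first.
  move=> x _ /=; case h: (rho x <= n')%N.
    rewrite mul1n /cnt; apply: eq_count => s.
    rewrite /tsum big_cons -/(tsum s).
    by apply/eqP/eqP => [<-|->]; [rewrite addKn | rewrite subnKC].
  rewrite mul0n; apply/eqP; rewrite -leqn0 leqNgt -has_count; apply/hasPn => s _.
  rewrite /tsum big_cons; apply/negP => /eqP hs.
  by move: h; rewrite -hs leq_addr.
rewrite (sum_rank (fun j => (j <= n')%N * cnt k (n' - j))) (big_ord_widen n.+1 (fun i => an i * count (fun s => tsum s == n' - i) (tups L k))%N) //.
rewrite big_mkcond /=; apply: eq_bigr => i _.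
by rewrite ltnS; case: (i <= n')%N; rewrite ?mul1n ?mul0n ?muln0.
Qed.


Let gn n' := count (fun s => (meet_seq s z == z) && (tsum s == n')) (tups L m).

Lemma all_L s : (tsum s <= n)%N -> all (mem L) s.
Proof.
move=> h; apply/allP => x hx; change (x \in L); rewrite Lmem; exact: leq_trans (rho_le_tsum hx) h.
Qed.

Lemma mzgE n' : (n' <= n)%N -> meet_zero_gf rho z m n' = (gn n')%:R%R.
Proof.
move=> hn'; rewrite /meet_zero_gf (card_tuple_set (L := L)
   (Q := fun s => meet_seq s z = z /\ (\sum_(p <- s) rho p)%N = n')
   (P := fun s => (meet_seq s z == z) && (tsum s == n'))).
- by [].
- exact: uL.
- move=> s _; split; first by case=> -> h; rewrite eqxx /tsum h eqxx.
  by case/andP => /eqP -> /eqP <-.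
- move=> s _ /andP[_ /eqP h]; apply: all_L; rewrite h //.
Qed.

Lemma meet_in_L s : s \in tups L m -> meet_seq s z \in L.
Proof.
rewrite mem_tups => /andP[/eqP hs hall]; case: s hs hall => [|x s'] hs.
  by move: hm; rewrite -hs.
move=> /andP[hx _] /=.
have := foldl_meet_ge (foldl Order.meet x s') x s'; rewrite lexx => /esym/andP[h _].
by rewrite Lmem; apply: leq_trans (rho_mono hmin hgr hup h) _; rewrite -Lmem.
Qed.

Lemma lift_map (q : T) (f : T -> T) : (forall y, (q <= y)%O -> exists x, f x = y) ->
  forall s, all (fun y => (q <= y)%O) s -> exists s0, map f s0 = s.
Proof.
move=> fsurj; elim=> [|y s IH] /=; first by exists [::].
case/andP => /fsurj [x hx] /IH [s0 hs0]; exists (x :: s0); by rewrite /= hx hs0.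
Qed.

Lemma tsum_map (q : T) (f : T -> T) : (forall x, (q <= f x)%O) ->
  (forall y, (q <= y)%O -> exists x, f x = y) ->
  (forall x y, (x <= y)%O <-> (f x <= f y)%O) ->
  forall s, tsum (map f s) = (size s * rho q + tsum s)%N.
Proof.
move=> fq fsurj fle; elim=> [|x s IH]; first by rewrite /tsum !big_nil.
rewrite /= /tsum !big_cons -!/(tsum _) IH (rho_f hmin hgr fq fsurj fle) mulSn.
by rewrite -!addnA; congr (_ + _); rewrite addnCA.
Qed.

Lemma countq q : q \in L ->
  count (fun s => (meet_seq s z == q) && (tsum s == n)) (tups L m) =
  ((m * rho q <= n) * gn (n - m * rho q))%N.
Proof.
move=> hq; have [f [fq fsurj fle]] := get_iso hup q.
have hall s : s \in tups L m -> meet_seq s z == q ->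
    all (fun y => (q <= y)%O) s /\ size s = m.
  rewrite mem_tups => /andP[/eqP hs _]; case: s hs => [|x s'] hs /=.
    by move: hm; rewrite -hs.
  move=> /eqP hq'; have := foldl_meet_ge q x s'; rewrite hq' lexx => /esym/andP[h1 h2].
  by rewrite h1 h2.
have hne (s0 : seq T) : size s0 = m -> exists y s0', s0 = y :: s0'.
  by case: s0 => [|y s0'] hs; [move: hm; rewrite -hs | exists y, s0'].
case: (leqP (m * rho q) n) => hle; rewrite ?mul1n ?mul0n.
- rewrite /gn -!size_filter -[in RHS](size_map (map f)); apply: perm_size; apply: uniq_perm.
  + by apply: filter_uniq; exact: (uniq_tups _ uL).
  + rewrite map_inj_uniq ?filter_uniq ?uniq_tups ?uL //; exact: inj_map (finj fle).
  move=> s; rewrite mem_filter; apply/andP/mapP.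
  + move=> [/andP[hmq /eqP hsum] hs].
    have [hal hsz] := hall s hs hmq.
    have [s0 hs0] := lift_map fsurj hal.
    exists s0 => //.
    have hsz0 : size s0 = m by rewrite -hsz -hs0 size_map.
    have ht : tsum s0 = (n - m * rho q)%N.
      by rewrite -hsum -hs0 (tsum_map fq fsurj fle) hsz0 addKn.
    rewrite mem_filter ht eqxx andbT mem_tups hsz0 eqxx /= all_L; last first.
      by rewrite ht leq_subr.
    have [y [s0' e]] := hne s0 hsz0; move: hmq; rewrite -hs0 e /=.
    rewrite -(f_foldl fq fsurj fle) andbT => /eqP h.
    by apply/eqP; apply: (finj fle); rewrite h (fz hmin fq fsurj fle).
  + move=> [s0 hs0 ->]; move: hs0; rewrite mem_filter => /andP[/andP[hmz /eqP hsum] hs0].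
    have hsz0 : size s0 = m by move: hs0; rewrite mem_tups => /andP[/eqP].
    have ht : tsum (map f s0) = n by rewrite (tsum_map fq fsurj fle) hsum hsz0 subnKC.
    split; last by rewrite mem_tups size_map hsz0 eqxx /= all_L ?ht.
    rewrite ht eqxx andbT.
    have [y [s0' e]] := hne s0 hsz0; move: hmz; rewrite e /= => /eqP h.
    by rewrite -(f_foldl fq fsurj fle) h (fz hmin fq fsurj fle).
- apply/eqP; rewrite -leqn0 leqNgt -has_count; apply/hasPn => s hs.
  apply/negP => /andP[hmq /eqP hsum]; have [hal hsz] := hall s hs hmq.
  have := tsum_ge hal; rewrite hsz hsum => h.
  by move: (leq_ltn_trans h hle); rewrite ltnn.
Qed.

Let bn i := if (m %| i)%N then an (i %/ m) else 0%N.

Lemma C1 : cnt m n = \sum_(q <- L) count (fun s => (meet_seq s z == q) && (tsum s == n)) (tups L m).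
Proof.
rewrite /cnt count_sum.
rewrite (eq_bigr (fun q => \sum_(s <- tups L m) ((meet_seq s z == q) && (tsum s == n)))); last first.
  by move=> q _; rewrite count_sum.
rewrite exchange_big; apply: eq_big_seq => s hs.
rewrite (eq_bigr (fun q => (tsum s == n) * (q == meet_seq s z)))%N; last first.
  by move=> q _; rewrite mulnC mulnb eq_sym.
rewrite -big_distrr -count_sum /=.
have := count_uniq_mem (meet_seq s z) uL; rewrite meet_in_L // => e.
by rewrite [count _ _]e muln1.
Qed.

Lemma C4 : (\sum_(j < n.+1) an j * ((m * j <= n) * gn (n - m * j)) =
  \sum_(i < n.+1) bn i * gn (n - i))%N.
Proof.
symmetry.
rewrite (eq_bigr (fun i : 'I_n.+1 =>
   \sum_(j < n.+1) (i == m * j :> nat) * (an j * gn (n - m * j))))%N; last first.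
  move=> [i hi] _ /=; rewrite ltnS in hi; rewrite /bn; case hd: (m %| i)%N.
  - rewrite (eq_bigr (fun j : 'I_n.+1 => (j == i %/ m :> nat) * (an j * gn (n - m * j))))%N; last first.
      move=> j _; congr (_ * _)%N.
      by rewrite -{1}(divnK hd) mulnC eqn_pmul2l // eq_sym.
    rewrite (sum_delta _ _ (fun j => an j * gn (n - m * j))%N) ltnS (leq_trans (leq_div i m) hi) mul1n (mulnC m) divnK //.
  - rewrite mul0n big1 // => j _.
    rewrite (_ : (i == m * j :> nat) = false) //.
    apply/negbTE; apply: contraFN hd => /eqP ->; exact: dvdn_mulr (dvdnn m).
rewrite exchange_big; apply: eq_bigr => j _.
by rewrite (sum_delta _ _ (fun _ => an j * gn (n - m * j))%N) ltnS mulnCA.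
Qed.

Lemma key : spow (rank_gf rho) m n =
  smul (ssubst_pow (rank_gf rho) m) (meet_zero_gf rho z m) n.
Proof.
rewrite spowE // /smul.
rewrite (eq_bigr (fun i : 'I_n.+1 => (bn i * gn (n - i))%N%:R%R)); last first.
  move=> [i hi] _ /=; rewrite ltnS in hi; rewrite mzgE ?leq_subr // /ssubst_pow /bn.
  case: (m %| i)%N; last by rewrite mul0r mul0n.
  rewrite rank_gfE ?natrM //; exact: leq_trans (leq_div i m) hi.
rewrite -natr_sum; congr (_%:R%R).
rewrite C1 (eq_big_seq (fun q => (fun j => (m * j <= n) * gn (n - m * j))%N (rho q))); last first.
  by move=> q hq; rewrite countq.
by rewrite (sum_rank (fun j => (m * j <= n) * gn (n - m * j))%N) C4.
Qed.

End Main.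

Unset Implicit Arguments.

Theorem corollary2 (d : Order.disp_t) (T : meetSemilatticeType d)
  (rho : T -> nat) (z : T)
  (hmin : forall p : T, (z <= p)%O)
  (hgr : N_graded rho) (hfin : finite_type rho) (hup : @upho d T)
  (m : nat) (hm : (1 <= m)%N) :
  meet_zero_gf rho z m =
  smul (spow (rank_gf rho) m) (sinv (ssubst_pow (rank_gf rho) m)).
Proof.
have hB0 : (ssubst_pow (rank_gf rho) m 0 != 0)%R.
  rewrite /ssubst_pow dvdn0 div0n /rank_gf.
  have -> : [set p : T | rho p = 0%N]%classic = [set z]%classic.
    apply/seteqP; split => p /=; first by move/(rho0 hmin hgr).
    by move=> ->; rewrite (rho_z hmin hgr).
  by rewrite /card_set fset_set1 cardfs1 oner_eq0.
have hs : spow (rank_gf rho) m = smul (ssubst_pow (rank_gf rho) m) (meet_zero_gf rho z m).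
  by apply: funext => n; apply: key.
by rewrite hs (smulC (ssubst_pow _ _)) smulA smul_sinv // smul1.
Qed.
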